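(* Let $X$ be a topological vector space over $\mathbb{K}$ ($\mathbb{K}=\mathbb{R}$ or $\mathbb{C}$) and let $\alpha$ be an infinite cardinal with $w(X)\le \dim(X)=\alpha$. Then there is a family $\{Y_\kappa\}_{\kappa<\alpha}$ of linear subspaces of $X$ such that: (1) each $Y_\kappa$ is a dense linear subspace of $X$ with $\dim(Y_\kappa)=\alpha$; (2) the family $\{Y_\kappa\}_{\kappa<\alpha}$ is linearly independent, i.e., the sum $\sum_{\kappa<\alpha}Y_\kappa$ is direct (in particular $Y_{\kappa_1}\cap Y_{\kappa_2}=\{0\}$ whenever $\kappa_1\neq\kappa_2$).
   Context: A topological vector space is a vector space with a topology making addition and scalar multiplication continuous. The weight $w(X)$ of a topological space is the smallest cardinality of a base for its topology. Indices $\kappa<\alpha$ range over ordinals less than $\alpha$. *)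

(* Defs.v *)
From HB Require Import structures.
From mathcomp Require Import all_boot all_order all_algebra.
From mathcomp Require Import all_classical all_reals all_analysis.
From mathcomp Require Import complex.

Set Implicit Arguments.
Unset Strict Implicit.
Unset Printing Implicit Defensive.

Import Order.TTheory GRing.Theory Num.Theory.
Local Open Scope classical_set_scope.
Local Open Scope ring_scope.
Local Open Scope card_scope.

Section LinAlg.
Variables (K : numDomainType) (V : lmodType K).

Definition is_subspace (Y : set V) : Prop :=
  Y 0 /\ forall (a : K) (x y : V), Y x -> Y y -> Y (a *: x + y).

Definition lin_indep (B : set V) : Prop :=
  forall (s : seq V) (c : V -> K), uniq s -> {subset s <= B} ->
    \sum_(v <- s) c v *: v = 0 -> forall v, v \in s -> c v = 0.

Definition lin_span (B : set V) : set V :=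
  [set x | exists (s : seq V) (c : V -> K),
      {subset s <= B} /\ x = \sum_(v <- s) c v *: v].

Definition hamel_basis (Y B : set V) : Prop :=
  B `<=` Y /\ lin_indep B /\ lin_span B = Y.

Definition dim_eq (Y : set V) (A : Type) : Prop :=
  exists B : set V, hamel_basis Y B /\ (B #= [set: A]).

Definition independent_family (A : choiceType) (Y : A -> set V) : Prop :=
  forall (s : seq A) (y : A -> V), uniq s -> (forall i, i \in s -> Y i (y i)) ->
    \sum_(i <- s) y i = 0 -> forall i, i \in s -> y i = 0.

End LinAlg.

Definition weight_le (X : topologicalType) (A : Type) : Prop :=
  exists B : set (set X), basis B /\ (B #<= [set: A]).

Definition theorem2p2_claim (K : numFieldType) : Prop :=
  forall (X : topologicalLmodType K) (A : choiceType),
    infinite_set [set: A] ->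
    weight_le X A ->
    dim_eq [set: X] A ->
    exists Y : A -> set X,
      (forall k, is_subspace (Y k) /\ dense (Y k) /\ dim_eq (Y k) A) /\
      independent_family Y.

(* Main.v *)
Require Import Defs.
From HB Require Import structures.
From mathcomp Require Import all_boot all_order all_algebra.
From mathcomp Require Import all_classical all_reals all_analysis.
From mathcomp Require Import complex.
From mathcomp Require Import wochoice.
From Stdlib Require Import Wellfounded.
Import numFieldTopology.Exports.

Set Implicit Arguments.
Unset Strict Implicit.
Unset Printing Implicit Defensive.
Import Order.TTheory GRing.Theory Num.Theory.

Section Chunk_H1.
Local Open Scope classical_set_scope.
Local Open Scope card_scope.

Lemma le_inj {T U} (A : set T) (B : set U) (f : T -> U) :
  {in A &, injective f} -> (forall x, A x -> B (f x)) -> A #<= B.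
Proof.
move=> fi fAB; apply: (@card_le_trans _ _ _ (f @` A)).
  by move: (inj_card_eq fi); rewrite card_eq_sym card_eq_le => /andP[].
by apply: subset_card_le => _ [x Ax <-]; exact: fAB.
Qed.

Lemma inj_le {T U} (A : set T) (B : set U) (u0 : U) : A #<= B ->
  exists f : T -> U, {in A &, injective f} /\ (forall x, A x -> B (f x)).
Proof.
move=> /card_leP[g].
pose f x := match pselect (A x) with left h => val (g (SigSub (mem_set h))) | right _ => u0 end.
exists f; split.
  move=> x y; rewrite !inE => Ax Ay; rewrite /f.
  case: pselect => // hx; case: pselect => // hy.
  move=> /val_inj /(@inj _ _ _ g); rewrite !inE => /(_ I I) [].
  done.
move=> x Ax; rewrite /f; case: pselect => // hx.
by case: (g _) => /= v; rewrite inE.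
Qed.

End Chunk_H1.

Section Chunk_H2.
Local Open Scope classical_set_scope.
Local Open Scope card_scope.

Lemma card_compare {T U} (A : set T) (B : set U) : A #<= B \/ B #<= A.
Proof.
pose P (G : set (T * U)) := [/\ forall p, G p -> A p.1 /\ B p.2,
  forall x y y', G (x, y) -> G (x, y') -> y = y' &
  forall x x' y, G (x, y) -> G (x', y) -> x = x'].
have [G [[GAB Gf Gi] Gmax]] : exists G, P G /\ forall G', G `<` G' -> ~ P G'.
  apply: Zorn_bigcup => F FP Ftot; split.
  - by move=> p [G FG Gp]; have [h _ _] := FP G FG; exact: h.
  - move=> x y y' [G1 F1 G1x] [G2 F2 G2x].
    have [h|h] := Ftot _ _ F1 F2.
      by have [_ h2 _] := FP _ F2; apply: h2 (h _ G1x) G2x.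
    by have [_ h2 _] := FP _ F1; apply: h2 G1x (h _ G2x).
  - move=> x x' y [G1 F1 G1x] [G2 F2 G2x].
    have [h|h] := Ftot _ _ F1 F2.
      by have [_ _ h2] := FP _ F2; apply: h2 (h _ G1x) G2x.
    by have [_ _ h2] := FP _ F1; apply: h2 G1x (h _ G2x).
have [domA|[a [Aa na]]] : (forall a, A a -> exists b, G (a, b)) \/
    exists a, A a /\ forall b, ~ G (a, b).
  case: (pselect (exists a, A a /\ forall b, ~ G (a, b))) => [h|h]; [by right|left].
  move=> a Aa; apply: contra_notP h => h; exists a; split=> // b Gab; apply: h; by exists b.
- left.
  have [u0|AE] := pselect (exists b : U, True); last first.
    have -> : A = set0.
      by apply/seteqP; split=> // a /domA [b _]; apply: AE; exists b.
    exact: card_ge0.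
  case: u0 => u0 _.
  pose f a := match pselect (exists b, G (a, b)) with
    left h => projT1 (cid h) | right _ => u0 end.
  have fG a : A a -> G (a, f a).
    move=> /domA h; rewrite /f; case: pselect => // h'.
    exact: projT2 (cid h').
  apply: (@le_inj _ _ _ _ f).
    by move=> x y; rewrite !inE => Ax Ay fxy; apply: (Gi x y (f x));
      [exact: fG|rewrite fxy; exact: fG].
  by move=> a Aa; have [] := GAB _ (fG a Aa).
- right.
  have ranB : forall b, B b -> exists a, G (a, b).
    move=> b Bb; case: (pselect (exists a, G (a, b))) => // nb; exfalso.
    have PG' : P (G `|` [set (a, b)]).
    split.
    + by move=> p [/GAB//|->].
    + move=> x y y' [Gx|/pair_equal_spec[-> ->]] [Gx'|/pair_equal_spec[ex ey]].
      * exact: Gf Gx Gx'.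
      * by move: ex Gx => -> /na.
      * by move: Gx' => /na.
      * by rewrite ey.
    + move=> x x' y [Gx|/pair_equal_spec[-> ->]] [Gx'|/pair_equal_spec[ex ey]].
      * exact: Gi Gx Gx'.
      * by move: ey Gx => -> Gx; exfalso; apply: nb; exists x.
      * by exfalso; apply: nb; exists x'.
      * by rewrite ex.
    apply: (Gmax _ _ PG'); split; first by move=> p Gp; left.
    by move=> /(_ (a, b) (or_intror erefl)) /na.
  pose f b0 := match pselect (exists a0, G (a0, b0)) with
    left h => projT1 (cid h) | right _ => a end.
  have fG b : B b -> G (f b, b).
    move=> /ranB h; rewrite /f; case: pselect => // h'.
    exact: projT2 (cid h').
  apply: (@le_inj _ _ _ _ f).
    by move=> x y; rewrite !inE => Bx By fxy; apply: (Gf (f x) x y);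
      [exact: fG|rewrite fxy; exact: fG].
  by move=> b Bb; have [] := GAB _ (fG b Bb).
Qed.

End Chunk_H2.

Section Chunk_H3.
Local Open Scope classical_set_scope.
Local Open Scope card_scope.

Lemma eq_bij {T U} (A : set T) (B : set U) (u0 : U) : A #= B ->
  exists f : T -> U, set_bij A B f.
Proof.
move=> /card_bijP[g gb].
have [ginv gK Kg] := gb.
pose f x := match pselect (A x) with left h => val (g (SigSub (mem_set h))) | right _ => u0 end.
exists f; split.
- move=> x Ax; rewrite /f; case: pselect => // hx.
  by case: (g _) => /= v; rewrite inE.
- move=> x y; rewrite !inE => Ax Ay; rewrite /f.
  case: pselect => // hx; case: pselect => // hy.
  move=> /val_inj /(can_inj gK) [] //.
- move=> y By; exists (val (ginv (SigSub (mem_set By)))).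
    by case: (ginv _) => /= v; rewrite inE.
  rewrite /f; case: pselect => h; last by case: (ginv _) h => /= v; rewrite inE.
  set z := SigSub _.
  have -> : z = ginv (SigSub (mem_set By)) by apply: val_inj.
  by rewrite Kg.
Qed.

Lemma prod_le {T U T' U'} (A : set T) (B : set U) (A' : set T') (B' : set U') :
  A #<= A' -> B #<= B' -> A `*` B #<= A' `*` B'.
Proof.
have [->|/set0P[a Aa]] := eqVneq A set0; first by move=> _ _; rewrite set0X; exact: card_ge0.
have [->|/set0P[b Bb]] := eqVneq B set0; first by move=> _ _; rewrite setX0; exact: card_ge0.
move=> hA hB; have [a' _] : exists a', A' a'.
  by move: hA => /card_leP[g]; case: (g (SigSub (mem_set Aa))) => v; rewrite inE; exists v.
have [b' _] : exists b', B' b'.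
  by move: hB => /card_leP[g]; case: (g (SigSub (mem_set Bb))) => v; rewrite inE; exists v.
have [f [fi fA]] := inj_le a' hA.
have [g [gi gB]] := inj_le b' hB.
apply: (@le_inj _ _ _ _ (fun p => (f p.1, g p.2))).
  move=> [x1 x2] [y1 y2]; rewrite !inE => -[/= h1 h2] [/= h3 h4] [e1 e2].
  by rewrite (fi _ _ (mem_set h1) (mem_set h3) e1) (gi _ _ (mem_set h2) (mem_set h4) e2).
by move=> [x1 x2] [/= h1 h2]; split; [apply: fA|apply: gB].
Qed.

End Chunk_H3.

Section Chunk_H4.
Local Open Scope classical_set_scope.
Local Open Scope card_scope.

Section Hess.
Variables (T : Type) (S : set T).

Definition granT (G : set ((T * T) * T)) := [set x | exists p, G (p, x)].

Definition goodG (G : set ((T * T) * T)) := [/\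
  forall p x y, G (p, x) -> G (p, y) -> x = y,
  forall p q x, G (p, x) -> G (q, x) -> p = q,
  forall a b, granT G a -> granT G b -> exists x, G ((a, b), x),
  forall p x, G (p, x) -> granT G p.1 /\ granT G p.2 &
  granT G `<=` S].

Lemma chain2 (F : set (set ((T * T) * T))) q1 q2 :
  total_on F subset -> (\bigcup_(X in F) X) q1 -> (\bigcup_(X in F) X) q2 ->
  exists G, [/\ F G, G q1 & G q2].
Proof.
move=> Ftot [G1 F1 G1q] [G2 F2 G2q].
have [h|h] := Ftot _ _ F1 F2; first by exists G2; split => //; apply: h.
by exists G1; split => //; apply: h.
Qed.

Lemma goodG_chain (F : set (set ((T * T) * T))) :
  F `<=` goodG -> total_on F subset -> goodG (\bigcup_(X in F) X).
Proof.
move=> FP Ftot; split.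
- move=> p x y h1 h2; have [G [FG G1 G2]] := chain2 Ftot h1 h2.
  by have [h _ _ _ _] := FP _ FG; exact: h G1 G2.
- move=> p q x h1 h2; have [G [FG G1 G2]] := chain2 Ftot h1 h2.
  by have [_ h _ _ _] := FP _ FG; exact: h G1 G2.
- move=> a b [p1 h1] [p2 h2]; have [G [FG G1 G2]] := chain2 Ftot h1 h2.
  have [_ _ h _ _] := FP _ FG.
  have [x Gx] : exists x, G ((a, b), x) by apply: h; [exists p1|exists p2].
  by exists x; exists G.
- move=> p x [G FG Gp]; have [_ _ _ h _] := FP _ FG.
  have [[q1 h1] [q2 h2]] := h p x Gp.
  by split; [exists q1|exists q2]; exists G.
- move=> x [p [G FG Gp]]; have [_ _ _ _ h] := FP _ FG; apply: h; by exists p.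
Qed.

End Hess.

End Chunk_H4.

Section Chunk_H5.
Local Open Scope classical_set_scope.
Local Open Scope card_scope.

Lemma hess {T} (S : set T) (t0 : T) : infinite_set S -> S `*` S #<= S.
Proof.
move=> Sinf.
have [i [ii iS]] := inj_le t0 ((infiniteP _).1 Sinf).
have iinj : injective i by move=> a b; apply: ii; apply: mem_set.
have {iS} iS n : S (i n) by apply: iS.
have [pi [_ pii pis]] := eq_bij 0%N card_nat2.
have piinj : injective pi by move=> a b; apply: pii; apply: mem_set.
have pisurj n : exists p, pi p = n by have [p _ <-] := pis n I; exists p.
pose G0 := [set q : (T * T) * T | exists a b, q = ((i a, i b), i (pi (a, b)))].
have ranG0 y : granT G0 y <-> exists n, y = i n.
  split; first by move=> [p [a [b /pair_equal_spec[_ ->]]]]; exists (pi (a, b)).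
  move=> [n ->]; have [[a b] <-] := pisurj n.
  by exists (i a, i b); exists a, b.
have G0good : goodG S G0.
  split.
  - move=> p x y [a [b /pair_equal_spec[-> ->]]] [a' [b' /pair_equal_spec[]]].
    by move=> /pair_equal_spec[/iinj -> /iinj ->] ->.
  - move=> p q x [a [b /pair_equal_spec[-> ->]]] [a' [b' /pair_equal_spec[-> ]]].
    by move=> /iinj/piinj/pair_equal_spec[-> ->].
  - move=> a b /ranG0[n ->] /ranG0[m ->].
    by exists (i (pi (n, m))); exists n, m.
  - move=> p x [a [b /pair_equal_spec[-> _]]] /=.
    by split; apply/ranG0; [exists a|exists b].
  - by move=> y /ranG0[n ->].
pose P G := (G = set0 \/ G0 `<=` G) /\ goodG S G.
have Zex : exists M, P M /\ forall B, M `<` B -> ~ P B.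
  apply: Zorn_bigcup => F FP Ftot; split; last first.
    by apply: goodG_chain => // G /FP [].
  case: (pselect (exists G, F G /\ G0 `<=` G)) => [[G [FG sub]]|nG]; [right|left].
    by move=> q /sub Gq; exists G.
  apply/seteqP; split=> // q [G FG Gq]; have [[e|sub] _] := FP _ FG.
    by rewrite e in Gq.
  by exfalso; apply: nG; exists G.
case: Zex => M [PM Mmax]; move: PM; rewrite /P; case=> [[M0|G0M] Mgood].
  exfalso; apply: (Mmax G0); last by split => //; right.
  rewrite M0; split => //; move=> /(_ ((i 0%N, i 0%N), i (pi (0%N, 0%N)))).
  by apply; exists 0%N, 0%N.
have [Mf Mi Md Mp MS] := Mgood.
pose R := granT M.
have Ri n : R (i n).
  have [p Gp] : granT G0 (i n) by apply/ranG0; exists n.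
  by exists p; apply: G0M.
pose f p := match pselect (exists x, M (p, x)) with
  left h => projT1 (cid h) | right _ => t0 end.
have fM a b : R a -> R b -> M ((a, b), f (a, b)).
  move=> Ra Rb; rewrite /f; case: pselect => h; first exact: projT2 (cid h).
  by exfalso; apply: h; apply: Md.
have fR a b : R a -> R b -> R (f (a, b)) by move=> Ra Rb; exists (a, b); apply: fM.
have finj a b c d : R a -> R b -> R c -> R d -> f (a, b) = f (c, d) -> a = c /\ b = d.
  move=> Ra Rb Rc Rd e; have := fM _ _ Ra Rb; rewrite e => h.
  by have /pair_equal_spec := Mi _ _ _ h (fM _ _ Rc Rd).
have RRle : R `*` R #<= R.
  apply: (@le_inj _ _ _ _ f); last by move=> [a b] [/= Ra Rb]; apply: (fR _ _).
  move=> [a b] [c d]; rewrite !inE => -[/= Ra Rb] [/= Rc Rd] /finj.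
  by move=> /(_ Ra Rb Rc Rd) [-> ->].
have RS : R `<=` S by apply: MS.
case: (pselect (S #<= R)) => SR.
  apply: (card_le_trans (prod_le SR SR)).
  exact: (card_le_trans RRle (subset_card_le RS)).
exfalso.
pose D := S `\` R.
have i01 : i 0%N <> i 1%N by move=> /iinj.
case: (card_compare D R) => [DR|RD].
  apply: SR; apply: (card_le_trans _ RRle).
  have [h [hi hR]] := inj_le t0 DR.
  pose g x := if pselect (R x) then (x, i 0%N) else (h x, i 1%N).
  apply: (@le_inj _ _ _ _ g).
    move=> x y; rewrite !inE => Sx Sy; rewrite /g.
    case: pselect => Rx; case: pselect => Ry /pair_equal_spec[e1 e2] //.
    all: try (by exfalso; apply: i01; rewrite e2).
    by apply: (hi x y) => //; apply: mem_set; split.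
  move=> x Sx; rewrite /g; case: pselect => Rx; first by split => //=.
  by split => //=; apply: hR.
have [h [hi hD]] := inj_le t0 RD.
pose D' := h @` R.
have D'D : D' `<=` D by move=> _ [x Rx <-]; apply: hD.
have disj x : R x -> D' x -> False by move=> Rx /D'D [].
pose hinv y := match pselect (exists x, R x /\ h x = y) with
  left e => projT1 (cid e) | right _ => t0 end.
have hinvK y : D' y -> R (hinv y) /\ h (hinv y) = y.
  move=> [x Rx hx]; rewrite /hinv; case: pselect => e; first exact: projT2 (cid e).
  by exfalso; apply: e; exists x.
pose RD' x := R x \/ D' x.
pose g x := if pselect (R x) then x else hinv x.
pose tg x := if pselect (R x) then i 0%N else i 1%N.
have gR x : RD' x -> R (g x).
  rewrite /g; case: pselect => // Rx [//|/hinvK[]//].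
have tgR x : R (tg x) by rewrite /tg; case: pselect => ?; apply: Ri.
have ginj x y : RD' x -> RD' y -> tg x = tg y -> g x = g y -> x = y.
  move=> hx hy; rewrite /g /tg.
  case: pselect => Rx; case: pselect => Ry.
  - by move=> _.
  - by move=> /i01.
  - by move=> /esym /i01.
  - move=> _ /= e; case: hx => [//|Dx]; case: hy => [//|Dy].
    by rewrite -(hinvK _ Dx).2 -(hinvK _ Dy).2 e.
pose Q := [set p : T * T | (R p.1 /\ D' p.2) \/ (D' p.1 /\ R p.2) \/ (D' p.1 /\ D' p.2)].
have QRD p : Q p -> RD' p.1 /\ RD' p.2.
  by move=> [[? ?]|[[? ?]|[? ?]]]; split; (left + right).
have QM p : Q p -> R p.1 -> R p.2 -> False.
  by move=> [[_ /disj]|[[/disj]|[/disj]]]; auto.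
pose k p := f (f (g p.1, g p.2), f (tg p.1, tg p.2)).
have QR : Q #<= R.
  apply: (@le_inj _ _ _ _ k); last first.
    by move=> p /QRD [h1 h2]; apply: (fR _ _); apply: (fR _ _); auto.
  move=> [a b] [c d]; rewrite !inE => /QRD[/= Ra Rb] /QRD[/= Rc Rd].
  move=> /finj[]; try by apply: (fR _ _); auto.
  move=> /finj[]; try by auto.
  move=> e1 e2 /finj[]; try by auto.
  move=> e3 e4; congr (_, _); [exact: ginj e1 | exact: ginj e2].
have RD'le : R #<= D'.
  apply: (@le_inj _ _ _ _ h); last by move=> x Rx; exists x.
  exact: hi.
have D'Q : D' #<= Q.
  apply: (@le_inj _ _ _ _ (fun y => (y, y))); last by move=> y Dy; right; right.
  by move=> x y _ _ [].
have [phi [phiQ phii phis]] := eq_bij t0 (Cantor_Bernstein (card_le_trans QR RD'le) D'Q).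
pose N := [set q : (T * T) * T | Q q.1 /\ q.2 = phi q.1].
pose M' := M `|` N.
have MQ p x : M (p, x) -> Q p -> False.
  by move=> /Mp [] Rp1 Rp2 /QM; apply.
have ranM' y : granT M' y <-> RD' y.
  split.
    move=> [p [My|[/= Qp ->]]]; first by left; exists p.
    by right; apply: phiQ.
  move=> [[p Mp']|Dy]; first by exists p; left.
  by have [p Qp <-] := phis _ Dy; exists p; right; split.
have M'good : goodG S M'.
  split.
  - move=> p x y [Mx|[/= Qp ->]] [My|[/= Qp' ->]] //.
    + exact: Mf Mx My.
    + by exfalso; apply: MQ Mx Qp'.
    + by exfalso; apply: MQ My Qp.
  - move=> p q x [Mx|[/= Qp ex]] [Mx'|[/= Qq ex']].
    + exact: Mi Mx Mx'.
    + by exfalso; apply: (disj x); [exists p|rewrite ex'; apply: phiQ].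
    + by exfalso; apply: (disj x); [exists q|rewrite ex; apply: phiQ].
    + by apply: phii; rewrite ?inE // -ex -ex'.
  - move=> a b /ranM' Ra /ranM' Rb.
    case: (pselect (R a /\ R b)) => [[Ra' Rb']|nR].
      by exists (f (a, b)); left; apply: fM.
    have Qab : Q (a, b).
      move: Ra Rb nR => [Ra|Da] [Rb|Db] nR; rewrite /Q /=.
      + by exfalso; apply: nR.
      + by left.
      + by right; left.
      + by right; right.
    by exists (phi (a, b)); right.
  - move=> p x [Mx|[/= Qp _]].
      have [h1 h2] := Mp _ _ Mx.
      by split; apply/ranM'; left.
    by have [h1 h2] := QRD _ Qp; split; apply/ranM'.
  - move=> y /ranM' [Ry|/D'D []//]; exact: RS.
apply: (Mmax M'); last by split => //; right; apply: subset_trans G0M _; move=> ? ?; left.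
split; first by move=> ? ?; left.
have Dy : D' (h (i 0%N)) by exists (i 0%N).
have Qq : Q (h (i 0%N), h (i 0%N)) by right; right.
move=> /(_ ((h (i 0%N), h (i 0%N)), phi (h (i 0%N), h (i 0%N)))) /(_ (or_intror (conj Qq erefl))).
by move=> /MQ; apply.
Qed.

End Chunk_H5.

Section Chunk_W1.
Local Open Scope classical_set_scope.
Local Open Scope card_scope.

Lemma wo_props (T : eqType) (R : rel T) : well_order R ->
  [/\ forall x, R x x, forall x y, R x y -> R y x -> x = y,
      forall x y, R x y || R y x &
      forall x y z, R x y -> R y z -> R x z].
Proof.
move=> wo.
have tot x y : R x y || R y x.
  have [|z [[/orP[/eqP->|/orP[/eqP->|//]] lb] _]] := wo (mem [:: x; y]).
  - by exists x; rewrite inE eqxx.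
  - by rewrite lb // !inE eqxx orbT.
  - by rewrite lb ?orbT // !inE eqxx.
have refl x : R x x by have := tot x x; rewrite orbb.
have anti x y : R x y -> R y x -> x = y.
  move=> xy yx; have [|z [_ uz]] := wo (mem [:: x; y]).
    by exists x; rewrite inE eqxx.
  have hx : minimum_of R (mem [:: x; y]) x.
    split; first by rewrite inE eqxx.
    by move=> w /orP[/eqP->|/orP[/eqP->|//]].
  have hy : minimum_of R (mem [:: x; y]) y.
    split; first by rewrite !inE eqxx orbT.
    by move=> w /orP[/eqP->|/orP[/eqP->|//]].
  by rewrite -(uz _ hx) (uz _ hy).
split => // x y z xy yz.
have [|m [[mS lb] _]] := wo (mem [:: x; y; z]).
  by exists x; rewrite inE eqxx.
move: mS; rewrite !inE => /or3P[/eqP em|/eqP em|/eqP em]; subst m.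
- by apply: lb; rewrite !inE eqxx !orbT.
- have e : y = x by apply: anti => //; apply: lb; rewrite !inE eqxx.
  by rewrite -e.
- have e : y = z by apply: anti => //; apply: lb; rewrite !inE eqxx !orbT.
  by rewrite e in xy.
Qed.

Lemma small_wo (T : choiceType) (t0 : T) : exists lt : T -> T -> Prop,
  [/\ well_founded lt, forall x y, x <> y -> lt x y \/ lt y x,
      forall x y z, lt x y -> lt y z -> lt x z, forall x, ~ lt x x &
      forall x, ~ ([set: T] #<= [set y | lt y x])].
Proof.
have [R wo] := well_ordering_principle T.
have [refl anti tot trans] := wo_props wo.
pose lt0 x y := R x y /\ x <> y.
have wf0 : well_founded lt0.
  move=> x; apply: contrapT => nx.
  have [|z [[zA lb] _]] := wo (mem [set x | ~ Acc lt0 x]).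
    by exists x; rewrite inE.
  rewrite inE in zA; apply: zA; constructor => y [yz nyz].
  apply: contrapT => ny; apply: nyz; apply: anti => //.
  by apply: lb; rewrite inE.
have tot0 x y : x <> y -> lt0 x y \/ lt0 y x.
  by move=> nxy; have /orP[h|h] := tot x y; [left|right]; split => // /esym.
have trans0 x y z : lt0 x y -> lt0 y z -> lt0 x z.
  move=> [xy nxy] [yz nyz]; split; first exact: trans xy yz.
  by move=> exz; subst z; apply: nxy; apply: anti.
have irr0 x : ~ lt0 x x by move=> [].
pose Pbig x := [set: T] #<= [set y | lt0 y x].
case: (pselect (exists x, Pbig x)) => [[x0 Px0]|nbig]; last first.
  by exists lt0; split => // x hx; apply: nbig; exists x.
have [|m [[mP lb] _]] := wo (mem Pbig); first by exists x0; rewrite in_setE; apply/asboolP.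
move: mP; rewrite in_setE => /asboolP mP.
have : [set: T] #= [set y | lt0 y m].
  by apply: Cantor_Bernstein => //; apply: card_leT.
move=> /(eq_bij t0) [phi [phiS phii _]].
exists (fun x y => lt0 (phi x) (phi y)); split.
- exact: wf_inverse_image.
- move=> x y nxy; apply: tot0 => /phii; rewrite !inE => /(_ I I); exact: nxy.
- by move=> x y z; apply: trans0.
- by move=> x; apply: irr0.
move=> x big.
have hb : Pbig (phi x).
  apply: (card_le_trans big).
  apply: (@le_inj _ _ _ _ phi) => //.
  by move=> y z _ _; apply: phii; rewrite inE.
have mx : R m (phi x) by apply: lb; rewrite in_setE; apply/asboolP; exact: hb.
have [px1 px2] := phiS x I.
by apply: px2; apply: anti.
Qed.

End Chunk_W1.

Section Chunk_L1.
Local Open Scope classical_set_scope.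
Local Open Scope ring_scope.

Section Lin.
Variables (K : numFieldType) (V : lmodType K).
Implicit Types (B W : set V).

Lemma big_count (s r : seq V) (F : V -> V) : uniq r -> {subset s <= r} ->
  \sum_(v <- s) F v = \sum_(v <- r) F v *+ count_mem v s.
Proof.
move=> ur; elim: s => [|x s IH] sr.
  by rewrite big_nil big1 // => v _; rewrite mulr0n.
have xr : x \in r by apply: sr; rewrite mem_head.
rewrite big_cons IH; last by move=> v vs; apply: sr; rewrite inE vs orbT.
have -> : \sum_(v <- r) F v *+ count_mem v (x :: s) =
   \sum_(v <- r) F v *+ (x == v) + \sum_(v <- r) F v *+ count_mem v s.
  by rewrite -big_split; apply: eq_bigr => v _ /=; rewrite mulrnDr.
congr (_ + _); rewrite (bigD1_seq x) //= eqxx mulr1n big1 ?addr0 //.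
by move=> v /negPf; rewrite eq_sym => ->; rewrite mulr0n.
Qed.

Lemma span_uniq B x : lin_span B x -> exists s (c : V -> K),
  [/\ uniq s, {subset s <= B} & x = \sum_(v <- s) c v *: v].
Proof.
move=> [s [c [sB ->]]]; exists (undup s), (fun v => c v *+ count_mem v s).
split; first exact: undup_uniq.
  by move=> v; rewrite mem_undup; apply: sB.
rewrite (@big_count s (undup s)) ?undup_uniq //; last by move=> v; rewrite mem_undup.
by apply: eq_bigr => v _; rewrite scalerMnl.
Qed.

Lemma span_subspace B : is_subspace (lin_span B).
Proof.
split; first by exists [::], (fun _ => 0); rewrite big_nil.
move=> a x y [s1 [c1 [s1B ->]]] [s2 [c2 [s2B ->]]].
pose r := undup (s1 ++ s2).
have ur : uniq r by exact: undup_uniq.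
have s1r : {subset s1 <= r} by move=> v vs; rewrite mem_undup mem_cat vs.
have s2r : {subset s2 <= r} by move=> v vs; rewrite mem_undup mem_cat vs orbT.
exists r, (fun v => (a * c1 v) *+ count_mem v s1 + c2 v *+ count_mem v s2).
split.
  by move=> v; rewrite mem_undup mem_cat => /orP[/s1B|/s2B].
rewrite scaler_sumr (@big_count s1 r) // (@big_count s2 r) //.
rewrite [RHS](eq_bigr (fun v => (a *: (c1 v *: v)) *+ count_mem v s1 +
  (c2 v *: v) *+ count_mem v s2)); last first.
  by move=> v _; rewrite scalerDl !scalerMnl scalerA mulrnAl.
by rewrite big_split.
Qed.

Lemma subspace0 W : is_subspace W -> W 0.
Proof. by case. Qed.

Lemma subspaceD W x y : is_subspace W -> W x -> W y -> W (x + y).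
Proof. by move=> [_ h] Wx Wy; have := h 1 x y Wx Wy; rewrite scale1r. Qed.

Lemma subspaceZ W a x : is_subspace W -> W x -> W (a *: x).
Proof.
by move=> [W0 h] Wx; have := h a x 0 Wx W0; rewrite addr0.
Qed.

Lemma subspaceN W x : is_subspace W -> W x -> W (- x).
Proof. by move=> hW Wx; rewrite -scaleN1r; apply: subspaceZ. Qed.

Lemma subspaceB W x y : is_subspace W -> W x -> W y -> W (x - y).
Proof. by move=> hW Wx Wy; apply: subspaceD => //; apply: subspaceN. Qed.

Lemma span_min B W : is_subspace W -> B `<=` W -> lin_span B `<=` W.
Proof.
move=> hW BW _ [s [c [sB ->]]]; elim: s sB => [|v s IH] sB.
  by rewrite big_nil; apply: subspace0.
rewrite big_cons; apply: hW.2.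
  by apply: BW; apply/set_mem/sB; rewrite mem_head.
by apply: IH => w ws; apply: sB; rewrite inE ws orbT.
Qed.

Lemma span_mono B B' : B `<=` B' -> lin_span B `<=` lin_span B'.
Proof.
move=> BB' _ [s [c [sB ->]]]; exists s, c; split => // v /sB /set_mem /BB'.
exact: mem_set.
Qed.

Lemma sub_span B : B `<=` lin_span B.
Proof.
move=> x Bx; exists [:: x], (fun _ => 1); split; last by rewrite big_seq1 scale1r.
by move=> v; rewrite inE => /eqP ->; apply: mem_set.
Qed.

Lemma span_span B : lin_span (lin_span B) `<=` lin_span B.
Proof. by apply: span_min; [exact: span_subspace|]. Qed.

Lemma mem_span_indep (E F : set V) (e : V) : lin_indep E -> F `<=` E -> E e ->
  lin_span F e -> F e.
Proof.
move=> iE FE Ee /span_uniq [s [c [us sF ex]]].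
case: (boolP (e \in s)) => [/sF/set_mem//|nes].
pose c' v := if v == e then -1 else c v.
have : c' e = 0.
  apply: (iE (e :: s) c') => //; last by rewrite mem_head.
  - by rewrite /= nes.
  - move=> v; rewrite inE => /orP[/eqP->|/sF/set_mem/FE]; exact: mem_set.
  rewrite big_cons /c' eqxx scaleN1r.
  rewrite big_seq (eq_bigr (fun v => c v *: v)) -?big_seq -?ex ?addNr //.
  by move=> v vs; case: eqP => // ev; move: vs; rewrite ev (negPf nes).
by rewrite /c' eqxx => /eqP; rewrite oppr_eq0 oner_eq0.
Qed.

End Lin.

End Chunk_L1.

Section Chunk_L2.
Local Open Scope classical_set_scope.
Local Open Scope ring_scope.
Local Open Scope card_scope.

Lemma small_not_span (K : numFieldType) (V : lmodType K) (E C : set V) :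
  lin_indep E -> lin_span E = setT -> infinite_set E -> ~ (E #<= C) ->
  exists x, ~ lin_span C x.
Proof.
move=> iE sE infE nEC.
case: (pselect (exists x, ~ lin_span C x)) => // hx; exfalso.
have allC x : lin_span C x by apply: contrapT => h; apply: hx; exists x.
pose sc (c : V) := match pselect (exists s : seq V, {subset s <= E} /\ lin_span [set` s] c)
  with left h => projT1 (cid h) | right _ => [::] end.
have scP c : {subset sc c <= E} /\ lin_span [set` sc c] c.
  rewrite /sc; case: pselect => h; first exact: projT2 (cid h).
  exfalso; apply: h.
  have : lin_span E c by rewrite sE.
  move=> [s [a [sE' ->]]]; exists s; split => //.
  by exists s, a; split => // v vs; apply: mem_set.
pose F := \bigcup_(c in C) [set` sc c].
have FE : F `<=` E by move=> v [c _ /= vs]; apply/set_mem/(scP c).1.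
have CF : C `<=` lin_span F.
  move=> c Cc; apply: (span_mono _ (scP c).2) => v /= vs; exists c => //.
have EF : E `<=` F.
  move=> e Ee; apply: (mem_span_indep iE FE Ee).
  apply: span_span; apply: (span_mono CF); exact: allC.
have EleF : E #<= F by apply: subset_card_le.
case: (pselect (finite_set C)) => finC.
  apply: infE; apply: (sub_finite_set EF).
  by apply: bigcup_finite => // c _; apply: finite_seq.
apply: nEC; apply: (card_le_trans EleF).
have : F #<= C `*` [set: nat].
  apply: (@card_le_trans _ _ _ ((fun p : V * nat => nth 0 (sc p.1) p.2) @` (C `*` [set: nat]))).
    apply: subset_card_le => v [c Cc /= vs].
    by exists (c, index v (sc c)) => //=; rewrite nth_index.
  exact: card_image_le.
move=> /card_le_trans; apply.
apply: (card_le_trans _ (hess 0 finC)).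
apply: prod_le => //.
exact: (infiniteP _).1 finC.
Qed.

End Chunk_L2.

Section Chunk_R1.
Local Open Scope classical_set_scope.
Local Open Scope ring_scope.
Local Open Scope card_scope.

Section Rec.
Variables (K : numFieldType) (V : lmodType K) (I : choiceType).
Variables (lt : I -> I -> Prop).
Hypothesis wf : well_founded lt.
Hypothesis tot : forall x y, x <> y -> lt x y \/ lt y x.
Hypothesis tr : forall x y z, lt x y -> lt y z -> lt x z.
Hypothesis irr : forall x, ~ lt x x.
Variable (T : I -> set V).
Hypothesis ext : forall i (C : set V), C #<= [set j | lt j i] ->
  exists x, T i x /\ ~ lin_span C x.

Lemma list_max (l : seq I) : l != [::] ->
  exists2 m, m \in l & forall j, j \in l -> j = m \/ lt j m.
Proof.
elim: l => // x [|y l] IH _.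
  by exists x; rewrite ?mem_head // => j; rewrite inE => /eqP; left.
have [//|m ml mmax] := IH.
case: (pselect (x = m)) => [->|xm].
  by exists m; [rewrite inE ml orbT|move=> j; rewrite inE => /orP[/eqP->|/mmax]; auto].
have [xlm|mlx] := tot xm.
  exists m; first by rewrite inE ml orbT.
  by move=> j; rewrite inE => /orP[/eqP->|/mmax]; auto.
exists x; first by rewrite mem_head.
move=> j; rewrite inE => /orP[/eqP->|/mmax[->|jm]]; [left|right|right] => //.
exact: tr jm mlx.
Qed.

Definition pick i (C : set V) : V :=
  match pselect (exists x, T i x /\ ~ lin_span C x) with
  | left h => projT1 (cid h) | right _ => 0 end.

Definition recF i (rec : forall j, lt j i -> V) : V :=
  pick i [set v | exists j (h : lt j i), v = rec j h].

Definition grec := Fix wf (fun _ => V) recF.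

Lemma grec_eq i : grec i = pick i (grec @` [set j | lt j i]).
Proof.
rewrite /grec Fix_eq; last first.
  move=> x f g fg; rewrite /recF; congr pick.
  by apply/seteqP; split => v [j [h ->]]; exists j, h.
rewrite /recF; congr pick; apply/seteqP; split.
  by move=> v [j [h ->]]; exists j.
by move=> _ [j h <-]; exists j, h.
Qed.

Lemma grecP i : T i (grec i) /\ ~ lin_span (grec @` [set j | lt j i]) (grec i).
Proof.
rewrite grec_eq /pick; case: pselect => h; first exact: projT2 (cid h).
exfalso; apply: h; apply: ext; exact: card_image_le.
Qed.

Lemma grec_inj : injective grec.
Proof.
move=> i j e; apply: contrapT => nij.
have [h|h] := tot nij.
  apply: (grecP j).2; rewrite -e; apply: sub_span; exists i => //.
apply: (grecP i).2; rewrite e; apply: sub_span; exists j => //.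
Qed.

Lemma grec_indep : lin_indep (range grec).
Proof.
move=> s c us sR s0 v0 v0s; apply: contrapT => cv0.
pose s' := [seq v <- s | c v != 0].
have s'0 : \sum_(v <- s') c v *: v = 0.
  rewrite big_filter; move: s0; rewrite (bigID (fun v => c v != 0)) /=.
  rewrite [X in _ + X]big1 ?addr0 //.
  by move=> v /negbNE/eqP ->; rewrite scale0r.
have idxP v : v \in s -> exists i, grec i = v.
  by move=> /sR /set_mem [i _ <-]; exists i.
have [i0 _] := idxP v0 v0s.
pose idx v := match pselect (exists i, grec i = v) with
  left h => projT1 (cid h) | right _ => i0 end.
have idxK v : v \in s -> grec (idx v) = v.
  move=> /idxP h; rewrite /idx; case: pselect => // h'; exact: projT2 (cid h').
have v0s' : v0 \in s' by rewrite mem_filter v0s andbT; apply/eqP.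
have [m /mapP[w ws' ->] mmax] : exists2 m, m \in map idx s' &
    forall j, j \in map idx s' -> j = m \/ lt j m.
  apply: list_max; apply/eqP => /(congr1 size); rewrite size_map => /eqP.
  by rewrite size_eq0 => /eqP e; rewrite e in v0s'.
have us' : uniq s' by exact: filter_uniq.
move: (ws'); rewrite mem_filter => /andP[cw ws].
move: s'0; rewrite (bigD1_seq w) //= => sw.
set S := \sum_(v <- s' | v != w) c v *: v in sw.
have Sspan : lin_span (grec @` [set j | lt j (idx w)]) S.
  exists [seq v <- s' | v != w], c; split; last by rewrite big_filter.
  move=> v; rewrite mem_filter => /andP[vw vs']; apply: mem_set.
  have vs : v \in s by move: vs'; rewrite mem_filter => /andP[].
  have [e|lvw] := mmax (idx v) (map_f idx vs').
    by move: vw; rewrite -(idxK v vs) e idxK ?eqxx.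
  by exists (idx v) => //; rewrite idxK.
apply: (grecP (idx w)).2; rewrite idxK //.
have ew : w = (c w)^-1 *: (- S).
  have e : c w *: w = - S by apply/eqP; rewrite -subr_eq0 opprK sw.
  by rewrite -e scalerA mulVf ?scale1r.
rewrite [X in lin_span _ X]ew.
apply: subspaceZ; first exact: span_subspace.
exact: subspaceN (span_subspace _) Sspan.
Qed.

End Rec.

End Chunk_R1.

Section Chunk_T1.
Local Open Scope classical_set_scope.
Local Open Scope ring_scope.

Lemma open_spans (K : numFieldType) (X : topologicalLmodType K) (U : set X) (u : X) :
  open U -> U u -> lin_span U = setT.
Proof.
move=> oU Uu; apply/seteqP; split => // x _.
have c1 : (fun t : K => t *: x) @ nbhs (0 : K) --> (0 : K) *: x.
  apply: (@continuous_comp K (K^o * X)%type X (fun t => (t, x)) (fun z => z.1 *: z.2)).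
    exact: (cvg_pair (@cvg_id _ (nbhs (0:K^o))) (cvg_cst x)).
  exact: scale_continuous.
have c2 : (fun t : K => u + t *: x) @ nbhs (0 : K) --> u + (0 : K) *: x.
  apply: (@continuous_comp K (X * X)%type X (fun t => (u, t *: x)) (fun z => z.1 + z.2)).
    exact: (cvg_pair (cvg_cst u) c1).
  exact: add_continuous.
rewrite scale0r addr0 in c2.
have : nbhs (0 : K) [set t | U (u + t *: x)].
  by apply: c2; apply: open_nbhs_nbhs; split.
move=> /nbhs_ballP[e e0 eU].
have [h1 h2] := midf_lt e0; rewrite add0r in h1 h2.
have t0 : e / 2 != 0 by rewrite gt_eqF.
have Ut : U (u + (e / 2) *: x).
  apply: eU; rewrite /ball /= sub0r normrN gtr0_norm //.
have -> : x = (e / 2)^-1 *: ((u + (e / 2) *: x) - u).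
  by rewrite addrC addKr scalerA mulVf ?scale1r.
apply: subspaceZ; first exact: span_subspace.
apply: subspaceB; first exact: span_subspace.
  exact: sub_span.
exact: sub_span.
Qed.

End Chunk_T1.

Section Chunk_M0.
Local Open Scope classical_set_scope.
Local Open Scope ring_scope.

Section Fam.
Variables (K : numFieldType) (V : lmodType K).

Lemma indep_sub (E F : set V) : lin_indep E -> F `<=` E -> lin_indep F.
Proof.
move=> iE FE s c us sF; apply: iE => // v /sF /set_mem /FE; exact: mem_set.
Qed.

Lemma disjoint_span (E P Q : set V) (y w : V) : lin_indep E -> P `<=` E -> Q `<=` E ->
  (forall v, P v -> Q v -> False) -> lin_span P y -> lin_span Q w -> y + w = 0 -> y = 0.
Proof.
move=> iE PE QE PQ /span_uniq[l1 [c1 [u1 s1 ->]]] /span_uniq[l2 [c2 [u2 s2 ->]]] e.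
pose C v := if v \in l1 then c1 v else c2 v.
have d v : v \in l1 -> v \in l2 -> False.
  by move=> /s1/set_mem Pv /s2/set_mem Qv; apply: PQ Pv Qv.
have uL : uniq (l1 ++ l2).
  rewrite cat_uniq u1 u2 andbT /=; apply/hasPn => v vl2; apply/negP => vl1.
  exact: d vl1 vl2.
have sL : \sum_(v <- l1 ++ l2) C v *: v = 0.
  rewrite big_cat /= -[RHS]e; congr (_ + _).
    by rewrite big_seq [RHS]big_seq; apply: eq_bigr => v vl1; rewrite /C vl1.
  rewrite big_seq [RHS]big_seq; apply: eq_bigr => v vl2; rewrite /C.
  by case: ifP => // vl1; exfalso; apply: d vl1 vl2.
have C0 v : v \in l1 -> c1 v = 0.
  move=> vl1; have := iE (l1 ++ l2) C uL _ sL v; rewrite /C vl1 mem_cat vl1; apply => //.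
  by move=> x; rewrite mem_cat => /orP[/s1/set_mem/PE|/s2/set_mem/QE]; apply: mem_set.
by rewrite big_seq big1 // => v /C0 ->; rewrite scale0r.
Qed.

Lemma fam_indep (A : choiceType) (E : set V) (Bk : A -> set V) :
  lin_indep E -> (forall k, Bk k `<=` E) ->
  (forall k j v, Bk k v -> Bk j v -> k = j) ->
  independent_family (fun k => lin_span (Bk k)).
Proof.
move=> iE BE Bd; elim=> [|k s IH] y //=.
move=> /andP[ks us] hy; rewrite big_cons => s0.
pose Q := [set v | exists j, j \in s /\ Bk j v].
have sQ : lin_span Q (\sum_(j <- s) y j).
  rewrite big_seq; apply: (big_ind (lin_span Q)).
  - exact: (span_subspace Q).1.
  - by move=> a b ha hb; apply: subspaceD => //; exact: span_subspace.
  move=> j js; apply: (span_mono _ (hy j _)); last by rewrite inE js orbT.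
  by move=> v Bv; exists j.
have yk0 : y k = 0.
  apply: (disjoint_span iE (BE k) _ _ (hy k (mem_head _ _)) sQ s0).
    by move=> v [j [_ /BE]].
  move=> v Bkv [j [js Bjv]]; have ekj := Bd _ _ _ Bkv Bjv.
  by move: ks; rewrite ekj js.
have s0' : \sum_(j <- s) y j = 0 by move: s0; rewrite yk0 add0r.
move=> i; rewrite inE => /orP[/eqP->//|iss].
apply: (IH y us _ s0' i iss) => j js; apply: hy; by rewrite inE js orbT.
Qed.

End Fam.

End Chunk_M0.

Section Chunk_M1.
Local Open Scope classical_set_scope.
Local Open Scope ring_scope.
Local Open Scope card_scope.

Lemma main_claim (K : numFieldType) : theorem2p2_claim K.
Proof.
move=> X A Ainf [Bs [Bbasis BsA]] [E [[_ [iE sE]] EA]].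
have [a0 _] := infinite_setN0 Ainf.
pose B' := [set W | Bs W /\ W !=set0].
have basP x (O : set X) : open O -> O x -> exists W, [/\ Bs W, W x & W `<=` O].
  move=> oO Ox; have := Bbasis.2 x O (open_nbhs_nbhs (conj oO Ox)).
  by move=> [W [BW Wx] WO]; exists W.
have [b0 [Bb0 [x0 b0x0]]] : exists b0, B' b0.
  have [W [BW W0 _]] := basP 0 setT openT I.
  by exists W; split => //; exists 0.
have [iota [iotai _]] := inj_le a0 BsA.
pose U a := match pselect (exists W, B' W /\ iota W = a) with
  left h => projT1 (cid h) | right _ => b0 end.
have UB' a : B' (U a).
  rewrite /U; case: pselect => h; [exact: (projT2 (cid h)).1|split => //; by exists x0].
have Uopen a : open (U a) by apply: Bbasis.1; exact: (UB' a).1.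
have Ucover (O : set X) : open O -> O !=set0 -> exists a, U a `<=` O.
  move=> oO [x Ox]; have [W [BW Wx WO]] := basP x O oO Ox.
  exists (iota W); rewrite /U; case: pselect => h; last first.
    by exfalso; apply: h; exists W; split => //; split => //; exists x.
  have [[BW' _] e] := projT2 (cid h).
  have -> // : projT1 (cid h) = W.
  by apply: iotai => //; apply: mem_set.
have [pi [_ pii pis]] : exists pi : A -> A * A, set_bij [set: A] [set: A * A] pi.
  apply: eq_bij (a0, a0) _; apply: Cantor_Bernstein.
    by apply: (@le_inj _ _ _ _ (fun a => (a, a0))) => // x y _ _ [].
  by rewrite -setXTT; exact: hess.
have pisurj p : exists i, pi i = p by have [i _ <-] := pis p I; exists i.
have piinj : injective pi by move=> x y; apply: pii; apply: mem_set.
have [lt [wf tot tr irr small]] := small_wo a0.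
have Einf : infinite_set E by rewrite (eq_finite_set EA).
pose T i := U (pi i).2.
have ext i (C : set X) : C #<= [set j | lt j i] -> exists x, T i x /\ ~ lin_span C x.
  move=> Cle.
  have nEC : ~ (E #<= C).
    move=> EC; apply: (small i); apply: (card_le_trans _ Cle).
    apply: (card_le_trans _ EC); rewrite card_eq_sym in EA.
    by move: EA; rewrite card_eq_le => /andP[].
  have [y ny] := small_not_span iE sE Einf nEC.
  apply: contrapT => nx; apply: ny.
  have TC : T i `<=` lin_span C.
    by move=> v Tv; apply: contrapT => nv; apply: nx; exists v.
  have : lin_span (T i) `<=` lin_span C.
    by move=> z /(span_mono TC) /span_span.
  have [t Tt] := (UB' (pi i).2).2.
  by rewrite (open_spans (Uopen _) Tt) => /(_ y I).
pose g := grec wf T.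
have gP i : T i (g i) := (grecP wf ext i).1.
have ginj : injective g := @grec_inj _ _ _ _ wf tot _ ext.
have gind : lin_indep (range g) := @grec_indep _ _ _ _ wf tot tr _ ext.
pose Bk k := g @` [set i | (pi i).1 = k].
exists (fun k => lin_span (Bk k)); split; last first.
  apply: fam_indep gind _ _.
    by move=> k _ [i _ <-]; exists i.
  by move=> k j _ [i1 e1 <-] [i2 e2 /ginj ei]; rewrite -e1 -e2 ei.
move=> k; split; first exact: span_subspace.
split.
  move=> O O0 oO; have [a Ua] := Ucover O oO O0.
  have [i e] := pisurj (k, a).
  exists (g i); split; last by apply: sub_span; exists i => //=; rewrite e.
  by apply: Ua; have := gP i; rewrite /T e.
exists (Bk k); split.
  split; first exact: sub_span.
  split => //; apply: indep_sub gind _.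
  by move=> _ [i _ <-]; exists i.
pose pinv p := projT1 (cid (pisurj p)).
have pinvK p : pi (pinv p) = p by rewrite /pinv; exact: projT2 (cid (pisurj p)).
have -> : Bk k = (fun a => g (pinv (k, a))) @` [set: A].
  apply/seteqP; split.
    move=> _ [i /= e <-]; exists (pi i).2 => //.
    by congr g; apply: piinj; rewrite pinvK -e; case: (pi i).
  by move=> _ [a _ <-]; exists (pinv (k, a)) => //=; rewrite pinvK.
apply: inj_card_eq => a b _ _ /ginj /(congr1 pi); rewrite !pinvK.
by case.
Qed.

End Chunk_M1.

Theorem theorem2p2 (R : realType) :
  theorem2p2_claim R /\ theorem2p2_claim (complex R).
Proof. by split; apply: main_claim. Qed.
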